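(* Let $\mathcal A$ be an ordered normed algebra with unit $e$ whose algebra cone $\mathcal A^+$ is normal and closed (in the norm topology). Let $a,b\in\mathcal A$ with at least one of them positive. Then there exists $\delta>0$ such that there is no $x\in\mathcal A$ with $\|x\|<\delta$ and $ab-ba\geq e+x$.
   Context: A normed algebra $\mathcal A$ (real or complex, with submultiplicative norm) with unit $e$. A cone is a nonempty subset $\mathcal A^+\subseteq\mathcal A$ with $\mathcal A^++\mathcal A^+\subseteq\mathcal A^+$, $\lambda\mathcal A^+\subseteq\mathcal A^+$ for all $\lambda\geq 0$, and $\mathcal A^+\cap(-\mathcal A^+)=\{0\}$; it induces the partial order $a\leq b \iff b-a\in\mathcal A^+$. Elements of $\mathcal A^+$ are called positive. The cone is an algebra cone if $\mathcal A^+\cdot\mathcal A^+\subseteq\mathcal A^+$ and $e\in\mathcal A^+$; then $\mathcal A$ is called an ordered normed algebra. The cone is normal if there is a constant $\alpha>0$ such that $0\leq x\leq y$ implies $\|x\|\leq\alpha\|y\|$. *)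

(* Defs.v *)
From HB Require Import structures.
From mathcomp Require Import all_boot all_order all_algebra.
From mathcomp Require Import all_classical all_reals all_analysis.
Set Implicit Arguments. Unset Strict Implicit. Unset Printing Implicit Defensive.
Import Order.TTheory GRing.Theory Num.Theory.
Import numFieldNormedType.Exports.
Local Open Scope classical_set_scope.
Local Open Scope ring_scope.

Record normed_algebra (R : realType) (V : normedModType R) := NormedAlgebra {
  alg_mul : V -> V -> V;
  alg_one : V;
  mulA : forall x y z, alg_mul x (alg_mul y z) = alg_mul (alg_mul x y) z;
  mulDl : forall x y z, alg_mul (x + y) z = alg_mul x z + alg_mul y z;
  mulDr : forall x y z, alg_mul x (y + z) = alg_mul x y + alg_mul x z;
  mulZl : forall (l : R) x y, alg_mul (l *: x) y = l *: alg_mul x y;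
  mulZr : forall (l : R) x y, alg_mul x (l *: y) = l *: alg_mul x y;
  mul1l : forall x, alg_mul alg_one x = x;
  mul1r : forall x, alg_mul x alg_one = x;
  one_neq0 : alg_one <> 0;
  normM_le : forall x y, `|alg_mul x y| <= `|x| * `|y|
}.

Section Cones.
Variables (R : realType) (V : normedModType R) (A : normed_algebra V).

Definition is_cone (C : set V) : Prop :=
  [/\ C !=set0,
      (forall x y, C x -> C y -> C (x + y)),
      (forall (l : R) x, 0 <= l -> C x -> C (l *: x)) &
      (forall x, C x -> C (- x) -> x = 0)].

Definition cone_le (C : set V) (a b : V) : Prop := C (b - a).

Definition is_algebra_cone (C : set V) : Prop :=
  [/\ is_cone C, (forall x y, C x -> C y -> C (alg_mul A x y)) & C (alg_one A)].

Definition normal_cone (C : set V) : Prop :=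
  exists2 alpha : R, 0 < alpha &
    forall x y : V, cone_le C 0 x -> cone_le C x y -> `|x| <= alpha * `|y|.
End Cones.

(* Main.v *)
Require Import Defs.
From HB Require Import structures.
From mathcomp Require Import all_boot all_order all_algebra.
From mathcomp Require Import all_classical all_reals all_analysis.
Import Order.TTheory GRing.Theory Num.Theory.
Import numFieldNormedType.Exports.
Local Open Scope classical_set_scope.
Local Open Scope ring_scope.

Lemma zm_aux (V : zmodType) (X Y Z W P : V) :
  X - Z - (W + P) = (X - Y - W) + (Y - Z - P).
Proof. by rewrite opprD !addrA [X - Y - W]addrAC subrK [X - Z - W]addrAC. Qed.

Lemma zm2 (V : zmodType) (u v x : V) : u - v - (u - (v + x)) = x.
Proof. by rewrite opprB addrA [u - v + _]addrA subrK addrC addKr. Qed.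

Section Key.
Variables (R : realType) (V : normedModType R) (A : normed_algebra V).
Local Notation M := (alg_mul A).
Local Notation e := (alg_one A).

Lemma mul0l' x : M 0 x = 0.
Proof. by apply: (addrI (M 0 x)); rewrite -Defs.mulDl !addr0. Qed.
Lemma mul0r' x : M x 0 = 0.
Proof. by apply: (addrI (M x 0)); rewrite -Defs.mulDr !addr0. Qed.
Lemma mulNl' x y : M (- x) y = - M x y.
Proof. by apply/eqP; rewrite -subr_eq0 opprK -Defs.mulDl addNr mul0l'. Qed.
Lemma mulNr' x y : M x (- y) = - M x y.
Proof. by apply/eqP; rewrite -subr_eq0 opprK -Defs.mulDr addNr mul0r'. Qed.
Lemma mulBl' x y z : M (x - y) z = M x z - M y z.
Proof. by rewrite Defs.mulDl mulNl'. Qed.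
Lemma mulBr' x y z : M x (y - z) = M x y - M x z.
Proof. by rewrite Defs.mulDr mulNr'. Qed.

Definition apow (p : V) (n : nat) : V := iter n (M p) e.

Lemma apowS p n : apow p n.+1 = M p (apow p n).
Proof. by []. Qed.
Lemma apowSr p n : apow p n.+1 = M (apow p n) p.
Proof.
elim: n => [|n IH]; first by rewrite /apow /= Defs.mul1l Defs.mul1r.
by rewrite [LHS]apowS {1}IH Defs.mulA -apowS.
Qed.

Variables (C : set V) (hC : is_algebra_cone A C).

Lemma apow_pos p n : C p -> C (apow p n).
Proof.
case: hC => _ hM h1 Cp; elim: n => [|n IH] //=; exact: hM.
Qed.

Definition D p q n := M (apow p n) q - M q (apow p n).

Lemma D_ge p q : C p -> C (M p q - M q p - e) ->
  forall n, C (D p q n.+1 - n.+1%:R *: apow p n).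
Proof.
move=> Cp Cr; case: hC => [[_ hadd hsc _] hM h1].
elim=> [|n IH].
  by rewrite /D scale1r /apow /= Defs.mul1r.
have -> : D p q n.+2 - n.+2%:R *: apow p n.+1 =
  M p (D p q n.+1 - n.+1%:R *: apow p n) + M (M p q - M q p - e) (apow p n.+1).
  rewrite /D mulBr' mulBr' Defs.mulZr -apowS mulBl' mulBl' Defs.mul1l.
  have -> : n.+2%:R *: apow p n.+1 = n.+1%:R *: apow p n.+1 + apow p n.+1.
    by rewrite -[n.+2]addn1 natrD scalerDl scale1r.
  have -> : M (apow p n.+2) q = M p (M (apow p n.+1) q).
    by rewrite apowS Defs.mulA.
  have -> : M q (apow p n.+2) = M (M q p) (apow p n.+1).
    by rewrite apowS Defs.mulA.
  have -> : M p (M q (apow p n.+1)) = M (M p q) (apow p n.+1) by rewrite Defs.mulA.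
  exact: zm_aux.
apply: hadd; [apply: hM => //|apply: hM => //; exact: apow_pos].
Qed.

Lemma D_norm p q n : `|D p q n| <= 2 * `|apow p n| * `|q|.
Proof.
rewrite /D; apply: le_trans (ler_normB _ _) _.
rewrite -mulrA mulr_natl mulr2n; apply: lerD.
  exact: normM_le.
by rewrite mulrC; apply: normM_le.
Qed.

Lemma key p q : C p -> normal_cone C -> ~ C (M p q - M q p - e).
Proof.
move=> Cp [al al0 hN] Cr.
have ineq n : n.+1%:R * `|apow p n| <= al * (2 * `|apow p n.+1| * `|q|).
  have := hN (n.+1%:R *: apow p n) (D p q n.+1).
  rewrite /cone_le subr0 normrZ ger0_norm // => H.
  apply: le_trans (H _ _) _.
  - case: hC => [[_ _ hsc _] _ _]; apply: hsc => //; exact: apow_pos.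
  - exact: D_ge.
  - by rewrite ler_wpM2l ?(ltW al0) // D_norm.
have down m : apow p m.+1 = 0 -> apow p m = 0.
  move=> h; have := ineq m; rewrite h normr0 mulr0 mul0r mulr0.
  rewrite pmulr_rle0 ?ltr0Sn // normr_le0 => /eqP //.
have downk m k : apow p (m + k) = 0 -> apow p m = 0.
  elim: k => [|k IH]; first by rewrite addn0.
  by rewrite addnS => /down.
set K := al * (2 * `|p| * `|q|).
set n := Num.Def.trunc K.
have hn : K < n.+1%:R by apply: truncnS_gt.
have zero : apow p n = 0.
  apply/eqP; rewrite -normr_le0.
  have h1 := ineq n.
  have h2 : al * (2 * `|apow p n.+1| * `|q|) <= K * `|apow p n|.
    rewrite /K -!mulrA ler_wpM2l ?(ltW al0) // ler_wpM2l //. rewrite mulrCA mulrC ler_wpM2l //; exact: normM_le.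
  have h3 := le_trans h1 h2.
  have : (n.+1%:R - K) * `|apow p n| <= 0 by rewrite mulrBl subr_le0.
  by rewrite pmulr_rle0 // subr_gt0.
have := downk 0%N n; rewrite add0n => /(_ zero). exact: (Defs.one_neq0 (n:=A)).
Qed.
End Key.

Theorem corollary2p3 (R : realType) (V : normedModType R) (A : normed_algebra V)
  (C : set V) (hC : is_algebra_cone A C) (hN : normal_cone C) (hcl : closed C)
  (a b : V) (hab : C a \/ C b) :
  exists2 delta : R, 0 < delta &
    ~ (exists x : V, `|x| < delta /\
         cone_le C (alg_one A + x) (alg_mul A a b - alg_mul A b a)).
Proof.
set c := alg_mul A a b - alg_mul A b a.
have nC : ~ C (c - alg_one A).
  case: hab => [Ca|Cb].
    exact: (@key _ _ A C hC a b Ca hN).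
  have := @key _ _ A C hC b (- a) Cb hN.
  rewrite mulNr' mulNl' opprK [- _ + _]addrC; exact.
have op := closed_openC hcl.
have : nbhs (c - alg_one A) (~` C) by apply: open_nbhs_nbhs; split.
move=> /nbhs_ballP [eps eps0 hb].
exists eps => // -[x [hx hle]].
apply: (hb (c - (alg_one A + x))) => //.
rewrite -ball_normE /ball_ /=.
rewrite zm2.
exact: hx.
Qed.
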